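(* In $\mathscr{L}=\mathbf{Set}^{\mathbf{[R]}}$ as described in the context, let $E$ be a central object (an object of the Drinfeld center of $\mathscr{L}$). Then the monad $T\mathcal{E}=T(-\oplus E)$ has a left strength, i.e. a family of morphisms $\Gamma\otimes T(A\oplus E)\to T((\Gamma\otimes A)\oplus E)$, natural in $\Gamma$ and $A$, compatible with the unit and multiplication of $T\mathcal{E}$ and with the associator and unitor of $\otimes$.
   Context: $\mathbf{[R]}$ is the set of finite lists of natural numbers, seen as a discrete category; $++$ is concatenation. $\mathscr{L}=\mathbf{Set}^{\mathbf{[R]}}$: objects are families of sets $A(l)$ indexed by lists $l$; morphisms are families of functions. Monoidal product (Day convolution): $(A\otimes B)(l)=\coprod_{l_1++l_2=l}A(l_1)\times B(l_2)$; unit $I([])=\{()\}$, $I(l)=\emptyset$ otherwise. Coproducts are pointwise: $(A\oplus B)(l)=A(l)+B(l)$. Right closed structure: $(A\rhd B)(l_1)=\prod_{l_2}(A(l_2)\to B(l_1++l_2))$. $[R](l)=\{l\}$. The allocation monad $T=[R]\rhd(-\otimes[R])$ is the monad of the adjunction $(-\otimes[R])\dashv([R]\rhd-)$. For an object $E$, $\mathcal{E}=-\oplus E$ is the exception monad and $T\mathcal{E}$ is the composite monad obtained from the distributive law $\mathcal{E}T\to T\mathcal{E}$ given by the copairing of $T(\mathrm{inl})$ and $\mathrm{inr};\eta$. $E$ is central (in the Drinfeld center) if there is a natural isomorphism $\theta_A:E\otimes A\cong A\otimes E$ with $\theta_{A\otimes B}=(\theta_A\otimes\mathrm{id});(\mathrm{id}\otimes\theta_B)$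 up to associators. *)

(* Defs.v *)
(* The presheaf category L = Set^[R], [R] = lists of naturals
   as a discrete category, presented concretely. *)
From Stdlib Require Import List.
Import ListNotations.



Definition Obj := list nat -> Set.

Definition Mor (A B : Obj) := forall l : list nat, A l -> B l.

Definition meq {A B : Obj} (f g : Mor A B) : Prop :=
  forall l (x : A l), f l x = g l x.

Definition idm (A : Obj) : Mor A A := fun l x => x.

(** Diagrammatic composition: [comp f g] is "f ; g" (first f, then g). *)
Definition comp {A B C : Obj} (f : Mor A B) (g : Mor B C) : Mor A C :=
  fun l x => g l (f l x).

(** Day convolution: (A ⊗ B)(l) = ∐_{l1 ++ l2 = l} A(l1) × B(l2). *)
Inductive tensor (A B : Obj) (l : list nat) : Set :=
  tpair (l1 l2 : list nat) (e : l1 ++ l2 = l) (a : A l1) (b : B l2).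
Arguments tpair {A B l} l1 l2 e a b.

Definition tmap {A A' B B' : Obj} (f : Mor A A') (g : Mor B B') :
  Mor (tensor A B) (tensor A' B') :=
  fun l t => match t with tpair l1 l2 e a b => tpair l1 l2 e (f l1 a) (g l2 b) end.

Definition Iobj : Obj := fun l => match l with [] => unit | _ :: _ => Empty_set end.

Definition lunit (A : Obj) : Mor (tensor Iobj A) A :=
  fun l t =>
    match t with
    | tpair l1 l2 e i a =>
      (match l1 as l1' return Iobj l1' -> l1' ++ l2 = l -> A l with
       | [] => fun _ e' => eq_rect l2 A a l e'
       | _ :: _ => fun i _ => match i with end
       end) i e
    end.

Lemma assoc_eq (l1 l2 l3 l12 l : list nat) :
  l1 ++ l2 = l12 -> l12 ++ l3 = l -> l1 ++ (l2 ++ l3) = l.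
Proof. intros H1 H2. subst. apply app_assoc. Qed.

Lemma assoc_inv_eq (l1 l2 l3 l23 l : list nat) :
  l2 ++ l3 = l23 -> l1 ++ l23 = l -> (l1 ++ l2) ++ l3 = l.
Proof. intros H1 H2. subst. symmetry. apply app_assoc. Qed.

Definition assoc (A B C : Obj) : Mor (tensor (tensor A B) C) (tensor A (tensor B C)) :=
  fun l t =>
    match t with
    | tpair l12 l3 e t' c =>
      match t' with
      | tpair l1 l2 e' a b =>
        tpair l1 (l2 ++ l3) (@assoc_eq l1 l2 l3 l12 l e' e) a (tpair l2 l3 eq_refl b c)
      end
    end.

Definition assoc_inv (A B C : Obj) : Mor (tensor A (tensor B C)) (tensor (tensor A B) C) :=
  fun l t =>
    match t with
    | tpair l1 l23 e a t' =>
      match t' with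
      | tpair l2 l3 e' b c =>
        tpair (l1 ++ l2) l3 (@assoc_inv_eq l1 l2 l3 l23 l e' e) (tpair l1 l2 eq_refl a b) c
      end
    end.

Definition oplus (A B : Obj) : Obj := fun l => (A l + B l)%type.
Definition inlm (A B : Obj) : Mor A (oplus A B) := fun l x => inl x.
Definition inrm (A B : Obj) : Mor B (oplus A B) := fun l x => inr x.
Definition copair {A B C : Obj} (f : Mor A C) (g : Mor B C) : Mor (oplus A B) C :=
  fun l x => match x with inl a => f l a | inr b => g l b end.
Definition omap {A A' B B' : Obj} (f : Mor A A') (g : Mor B B') :
  Mor (oplus A B) (oplus A' B') :=
  copair (comp f (inlm A' B')) (comp g (inrm A' B')).

(** Right closed structure: (A ▷ B)(l1) = ∏_{l2} (A(l2) → B(l1 ++ l2)). *)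
Definition rhd (A B : Obj) : Obj := fun l1 => forall l2 : list nat, A l2 -> B (l1 ++ l2).

(** [R](l) = {l}. *)
Definition RR : Obj := fun l => {l' : list nat | l' = l}.

(** The allocation monad T = [R] ▷ (- ⊗ [R]), monad of (- ⊗ [R]) ⊣ ([R] ▷ -). *)
Definition T (A : Obj) : Obj := rhd RR (tensor A RR).

Definition Tmap {A B : Obj} (f : Mor A B) : Mor (T A) (T B) :=
  fun l t l2 r => tmap f (idm RR) (l ++ l2) (t l2 r).

Definition etaT (A : Obj) : Mor A (T A) :=
  fun l a l2 r => tpair l l2 eq_refl a r.

Definition epsT (B : Obj) : Mor (tensor (rhd RR B) RR) B :=
  fun l t => match t with tpair m1 m2 e f r => eq_rect (m1 ++ m2) B (f m2 r) l e end.

(** Multiplication  T T A = [R] ▷ (([R] ▷ (A⊗[R])) ⊗ [R]) → [R] ▷ (A⊗[R]),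
    i.e. [R] ▷ ε_{A⊗[R]}. *)
Definition muT (A : Obj) : Mor (T (T A)) (T A) :=
  fun l t l2 r => epsT (tensor A RR) (l ++ l2) (t l2 r).

Definition TE (E A : Obj) : Obj := T (oplus A E).

Definition TEmap (E : Obj) {A B : Obj} (f : Mor A B) : Mor (TE E A) (TE E B) :=
  Tmap (omap f (idm E)).

Definition etaTE (E A : Obj) : Mor A (TE E A) :=
  comp (inlm A E) (etaT (oplus A E)).

(** Distributive law E T → T E : copairing of T(inl) and inr ; η. *)
Definition distl (E X : Obj) : Mor (oplus (T X) E) (T (oplus X E)) :=
  copair (Tmap (inlm X E)) (comp (inrm X E) (etaT (oplus X E))).

Definition muE (E A : Obj) : Mor (oplus (oplus A E) E) (oplus A E) :=
  copair (idm (oplus A E)) (inrm A E).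

(** Multiplication of the composite monad:
    T E T E A --T λ--> T T E E A --T T μ^E--> T T E A --μ^T--> T E A. *)
Definition muTE (E A : Obj) : Mor (TE E (TE E A)) (TE E A) :=
  comp (Tmap (distl E (oplus A E)))
       (comp (Tmap (Tmap (muE E A))) (muT (oplus A E))).

Definition half_braiding (E : Obj) (theta : forall A, Mor (tensor E A) (tensor A E)) : Prop :=
  (exists theta_inv : forall A, Mor (tensor A E) (tensor E A),
      forall A, meq (comp (theta A) (theta_inv A)) (idm _)
             /\ meq (comp (theta_inv A) (theta A)) (idm _))
  /\ (forall (A B : Obj) (f : Mor A B),
        meq (comp (tmap (idm E) f) (theta B)) (comp (theta A) (tmap f (idm E))))
  /\ (forall A B : Obj,
        meq (theta (tensor A B))
            (comp (assoc_inv E A B)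
            (comp (tmap (theta A) (idm B))
            (comp (assoc A E B)
            (comp (tmap (idm A) (theta B))
                  (assoc_inv A B E)))))).

Definition central (E : Obj) : Prop :=
  exists theta : forall A, Mor (tensor E A) (tensor A E), half_braiding E theta.

Definition is_left_strength (M : Obj -> Obj)
  (Mmap : forall A B : Obj, Mor A B -> Mor (M A) (M B))
  (eta : forall A, Mor A (M A)) (mu : forall A, Mor (M (M A)) (M A))
  (st : forall G A : Obj, Mor (tensor G (M A)) (M (tensor G A))) : Prop :=
  (forall (G G' A A' : Obj) (f : Mor G G') (g : Mor A A'),
      meq (comp (tmap f (Mmap A A' g)) (st G' A'))
          (comp (st G A) (Mmap _ _ (tmap f g))))
  /\ (forall A : Obj,
      meq (comp (st Iobj A) (Mmap _ _ (lunit A))) (lunit (M A)))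
  /\ (forall G D A : Obj,
      meq (comp (st (tensor G D) A) (Mmap _ _ (assoc G D A)))
          (comp (assoc G D (M A)) (comp (tmap (idm G) (st D A)) (st G (tensor D A)))))
  /\ (forall G A : Obj,
      meq (comp (tmap (idm G) (eta A)) (st G A)) (eta (tensor G A)))
  /\ (forall G A : Obj,
      meq (comp (tmap (idm G) (mu A)) (st G A))
          (comp (st G (M A)) (comp (Mmap _ _ (st G A)) (mu (tensor G A))))).

(* Main.v *)
Require Import Defs.
From Stdlib Require Import List Eqdep_dec FunctionalExtensionality Arith.
Import ListNotations.

Lemma UIPl {l l' : list nat} (p q : l = l') : p = q.
Proof. apply UIP_dec. apply list_eq_dec. apply Nat.eq_dec. Qed.

Lemma RR_irr (l : list nat) (x y : RR l) : x = y.
Proof.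
  destruct x as [x hx], y as [y hy]. subst. reflexivity.
Qed.

Lemma tpair_irr {X : Obj} {L l1 l2} (e e' : l1 ++ l2 = L) (a : X l1) (b b' : RR l2) :
  tpair l1 l2 e a b = tpair l1 l2 e' a b'.
Proof. rewrite (UIPl e e'), (RR_irr _ b b'). reflexivity. Qed.

Lemma eq_rect_tpair {X Y : Obj} {L L'} (H : L = L') l1 l2 e (a : X l1) (b : Y l2) :
  eq_rect L (tensor X Y) (tpair l1 l2 e a b) L' H = tpair l1 l2 (eq_trans e H) a b.
Proof. destruct H. simpl. destruct e. reflexivity. Qed.

Lemma central_nil (E : Obj) (HE : central E) : forall m, E m -> m = [].
Proof.
  intros m ee. destruct m as [|y l']; [reflexivity|]. exfalso.
  destruct HE as [th _].
  pose (A := (fun m => {u : unit | m = [S y]}) : Obj).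
  pose (z := th A ((y :: l') ++ [S y]) (tpair (y :: l') [S y] eq_refl ee (exist _ tt eq_refl))).
  destruct z as [m1 m2 h a b]. destruct a as [_ Ha]. subst m1.
  simpl in h. injection h. intros _ H. apply (n_Sn y). symmetry. exact H.
Qed.

Lemma st_pf1 (l1 l2 l l3 m1 m2 : list nat) (e : l1++l2 = l) (e' : m1++m2 = l2++l3) :
  (l1++m1)++m2 = l++l3.
Proof. subst. rewrite <- !app_assoc. rewrite e'. reflexivity. Qed.

Lemma st_pf2 (l1 l2 l l3 m1 m2 : list nat) (e : l1++l2 = l) (e' : m1++m2 = l2++l3)
  (h : m1 = []) : m1 ++ (l1 ++ m2) = l ++ l3.
Proof. subst. simpl in *. subst. rewrite app_assoc. reflexivity. Qed.

Definition stE (E : Obj) (H : forall m, E m -> m = []) (G A : Obj) :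
  Mor (tensor G (TE E A)) (TE E (tensor G A)) :=
 fun l x => match x with tpair l1 l2 e g t =>
  fun l3 r => match t l3 r with tpair m1 m2 e' y r' =>
    match y with
    | inl a => tpair (l1++m1) m2 (st_pf1 l1 l2 l l3 m1 m2 e e')
                 (inl (tpair l1 m1 eq_refl g a)) (exist _ m2 eq_refl)
    | inr ee => tpair m1 (l1++m2) (st_pf2 l1 l2 l l3 m1 m2 e e' (H m1 ee))
                 (inr ee) (exist _ (l1++m2) eq_refl)
    end end end.

Lemma nat_law (E : Obj) (H : forall m, E m -> m = []) :
 forall (G G' A A' : Obj) (f : Mor G G') (g : Mor A A'),
      meq (comp (tmap f (TEmap E g)) (stE E H G' A'))
          (comp (stE E H G A) (TEmap E (tmap f g))).
Proof.
  intros G G' A A' f g l x. destruct x as [l1 l2 e c t].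
  unfold comp, tmap, stE, TEmap, Tmap.
  extensionality l3. extensionality r. simpl.
  destruct (t l3 r) as [m1 m2 e' y r']. destruct y as [a|ee]; simpl; reflexivity.
Qed.

Lemma unit_law (E : Obj) (H : forall m, E m -> m = []) :
  forall A : Obj,
      meq (comp (stE E H Iobj A) (TEmap E (lunit A))) (lunit (TE E A)).
Proof.
  intros A l x. destruct x as [l1 l2 e i t].
  destruct l1 as [|k l1]; [|destruct i].
  simpl in e. subst l2.
  unfold comp, stE, TEmap, Tmap. simpl.
  extensionality l3. extensionality r.
  destruct (t l3 r) as [m1 m2 e' y r']. destruct y as [a|ee]; simpl; apply tpair_irr.
Qed.

Lemma eta_law (E : Obj) (H : forall m, E m -> m = []) :
  forall G A : Obj,
      meq (comp (tmap (idm G) (etaTE E A)) (stE E H G A)) (etaTE E (tensor G A)).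
Proof.
  intros G A l x. destruct x as [l1 l2 e c a]. subst l.
  unfold comp, stE, etaTE, etaT, tmap, idm. simpl.
  extensionality l3. extensionality r.
  unfold inlm. apply tpair_irr.
Qed.

Lemma tpair_l1 {L l1 l1' l2} (e : l1 ++ l2 = L) (e' : l1' ++ l2 = L)
  {P : Obj} {Q : Obj} {F : Obj} p q (h : p ++ q = l1) (h' : p ++ q = l1') (x : P p) (y : Q q)
   (b b' : RR l2) :
  @tpair (oplus (tensor P Q) F) RR L l1 l2 e (inl (tpair p q h x y)) b =
  tpair l1' l2 e' (inl (tpair p q h' x y)) b'.
Proof. subst l1 l1'. apply tpair_irr. Qed.

Lemma tpair_l2 {X : Obj} {L l1 l2 l2'} (e : l1 ++ l2 = L) (e' : l1 ++ l2' = L)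
  (x : X l1) (b : RR l2) (b' : RR l2') : l2 = l2' ->
  tpair l1 l2 e x b = tpair l1 l2' e' x b'.
Proof. intros ->. apply tpair_irr. Qed.

Lemma assoc_law (E : Obj) (H : forall m, E m -> m = []) :
  forall G D A : Obj,
      meq (comp (stE E H (tensor G D) A) (TEmap E (assoc G D A)))
          (comp (assoc G D (TE E A)) (comp (tmap (idm G) (stE E H D A)) (stE E H G (tensor D A)))).
Proof.
  intros G D A l x. destruct x as [l12 l3 e gd t]. destruct gd as [lg ld eg c d].
  subst l12 l.
  unfold comp, stE, TEmap, Tmap, tmap, idm, assoc. simpl.
  extensionality l4. extensionality r.
  destruct (t l4 r) as [m1 m2 e' y r']. destruct y as [a|ee]; simpl.
  - apply tpair_l1.
  - apply tpair_l2. symmetry; apply app_assoc.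
Qed.

Lemma mu_law (E : Obj) (H : forall m, E m -> m = []) :
  forall G A : Obj,
      meq (comp (tmap (idm G) (muTE E A)) (stE E H G A))
          (comp (stE E H G (TE E A)) (comp (TEmap E (stE E H G A)) (muTE E (tensor G A)))).
Proof.
  intros G A l x. destruct x as [l1 l2 e c tt]. subst l.
  unfold muTE, muT, distl, comp, stE, TEmap, Tmap, tmap, idm, epsT, distl, muE, copair, omap, comp, inlm, inrm, etaT, idm. simpl.
  extensionality l3. extensionality r.
  destruct (tt l3 r) as [m1 m2 e1 y r1]. destruct y as [u|ee]; simpl.
  - rewrite (RR_irr _ (exist (fun l' : list nat => l' = m2) m2 eq_refl) r1).
    destruct (u m2 r1) as [k1 k2 e2 z r2]. simpl.
    destruct z as [a|ee]; simpl; rewrite !eq_rect_tpair; apply tpair_irr.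
  - rewrite !eq_rect_tpair. simpl. apply tpair_irr.
Qed.

Theorem proposition4 (E : Obj) (HE : central E) :
  exists st : forall G A : Obj, Mor (tensor G (TE E A)) (TE E (tensor G A)),
    is_left_strength (TE E) (fun A B f => TEmap E f) (etaTE E) (muTE E) st.
Proof.
  pose proof (central_nil E HE) as H.
  exists (stE E H). unfold is_left_strength.
  split; [exact (nat_law E H)|].
  split; [exact (unit_law E H)|].
  split; [exact (assoc_law E H)|].
  split; [exact (eta_law E H)|].
  exact (mu_law E H).
Qed.
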